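(* Let $\pi,\tau\in\mathfrak{S}_m$. If $\mathcal{O}_\pi=\mathcal{O}_\tau$ and, for all $i\in\mathcal{O}_\pi$, we have $\{\pi_1,\dots,\pi_{m-i}\}=\{\tau_1,\dots,\tau_{m-i}\}$ and $\{\pi_{i+1},\dots,\pi_m\}=\{\tau_{i+1},\dots,\tau_m\}$, then $\pi$ and $\tau$ are super-strongly c-Wilf equivalent.
   Context: $\mathfrak{S}_n$ is the symmetric group on $[n]$, permutations written $\sigma=\sigma_1\cdots\sigma_n$. The standardization $\operatorname{st}(w)$ of a word of distinct integers replaces its smallest entry by 1, the next smallest by 2, etc. For $\pi\in\mathfrak{S}_m$ and $\sigma\in\mathfrak{S}_n$, $\operatorname{Em}(\pi,\sigma)=\{i\in[n-m+1]:\operatorname{st}(\sigma_i\cdots\sigma_{i+m-1})=\pi\}$. For a set $S$ of positive integers, $a^\pi_{n,S}$ is the number of $\sigma\in\mathfrak{S}_n$ with $\operatorname{Em}(\pi,\sigma)=S$; $\pi$ and $\tau$ are super-strongly c-Wilf equivalent if $a^\pi_{n,S}=a^\tau_{n,S}$ for all $n$ and all $S$. The overlap set of $\pi\in\mathfrak{S}_m$ is $\mathcal{O}_\pi=\{i\in[m-1]:\operatorname{st}(\pi_{i+1}\cdots\pi_m)=\operatorname{st}(\pi_1\cdots\pi_{m-i})\}$. *)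

(* Defs.v *)
From mathcomp Require Import all_boot.
Set Implicit Arguments. Unset Strict Implicit. Unset Printing Implicit Defensive.

Definition is_perm (m : nat) (s : seq nat) : bool := perm_eq s (iota 1 m).

(* Standardization of a word of distinct integers: each entry x is replaced
   by its rank #{y in w | y <= x}. *)
Definition st (w : seq nat) : seq nat := [seq count (fun y => y <= x) w | x <- w].

(* The factor sigma_i ... sigma_{i+k-1} (i is 1-based). *)
Definition window (s : seq nat) (i k : nat) : seq nat := take k (drop i.-1 s).

Definition Em (pi sigma : seq nat) : seq nat :=
  [seq i <- iota 1 (size sigma + 1 - size pi)
     | st (window sigma i (size pi)) == pi].

Definition seteq (s t : seq nat) : bool := all (mem t) s && all (mem s) t.

Definition a_count (pi : seq nat) (n : nat) (S : seq nat) : nat :=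
  count (fun sigma => seteq (Em pi sigma) S) (permutations (iota 1 n)).

Definition super_strongly_cwilf_equiv (pi tau : seq nat) : Prop :=
  forall (n : nat) (S : seq nat), all (fun i => 0 < i) S ->
    a_count pi n S = a_count tau n S.

Definition overlaps (pi : seq nat) : seq nat :=
  [seq i <- iota 1 (size pi).-1 | st (drop i pi) == st (take (size pi - i) pi)].

(* Main.v *)
Require Import Defs.
From mathcomp Require Import all_boot zify.
Set Implicit Arguments. Unset Strict Implicit. Unset Printing Implicit Defensive.

Definition rank (w : seq nat) (x : nat) := count (fun y => y <= x) w.

Lemma st_rank w : st w = map (rank w) w.
Proof. by []. Qed.

Lemma rank_mono w y z : y <= z -> rank w y <= rank w z.
Proof. move=> yz; apply: sub_count => t /= ty; exact: leq_trans ty yz. Qed.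

Lemma rank_lt w y z : y < z -> z \in w -> rank w y < rank w z.
Proof.
move=> yz; elim: w => [|t w IH] //=; rewrite inE /rank /=.
case/orP=> [/eqP<-|zw].
  have := @rank_mono w _ _ (ltnW yz); rewrite /rank.
  by rewrite leqnn (leqNgt z y) yz /=; lia.
have := IH zw; rewrite /rank.
have : (t <= y) <= (t <= z).
  by case: (leqP t y) => // ty; rewrite (leq_trans ty (ltnW yz)).
lia.
Qed.

Lemma rank_inj w y z : y \in w -> z \in w -> rank w y = rank w z -> y = z.
Proof.
move=> yw zw e; case: (ltngtP y z) => // h.
  by have := rank_lt h zw; rewrite e ltnn.
by have := rank_lt h yw; rewrite e ltnn.
Qed.

Lemma rank_le_iff w y z : y \in w -> (rank w y <= rank w z) = (y <= z).
Proof.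
move=> yw; case: (leqP y z) => h; first exact: rank_mono.
by apply: negbTE; rewrite -ltnNge; apply: rank_lt.
Qed.

Lemma st_map_mono (f : nat -> nat) u :
  {in u &, forall x y, (f x <= f y) = (x <= y)} -> st (map f u) = st u.
Proof.
move=> H; rewrite /st -map_comp; apply/eq_in_map => x xu /=.
rewrite count_map; apply: eq_in_count => y yu /=; exact: H.
Qed.

Lemma st_sub_rank w u : {subset u <= w} -> st (map (rank w) u) = st u.
Proof.
move=> sub; apply: st_map_mono => x y xu yu; exact: rank_le_iff (sub _ xu).
Qed.

Lemma size_st w : size (st w) = size w.
Proof. by rewrite /st size_map. Qed.

Lemma nth_st w j : j < size w -> nth 0 (st w) j = rank w (nth 0 w j).
Proof. by move=> h; rewrite /st (nth_map 0). Qed.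

Lemma rank_perm u v x : perm_eq u v -> rank u x = rank v x.
Proof. by move/permP=> h; rewrite /rank h. Qed.

Lemma overlaps_mem pi d : (d \in overlaps pi) =
  (0 < d < size pi) && (st (drop d pi) == st (take (size pi - d) pi)).
Proof.
rewrite /overlaps mem_filter mem_iota andbC; congr (_ && _).
case: (size pi) => [|k] /=; first by lia. lia.
Qed.

Lemma consist pi tau d x : uniq pi -> perm_eq pi tau ->
  d \in overlaps pi -> d \in overlaps tau ->
  take (size pi - d) pi =i take (size pi - d) tau -> drop d pi =i drop d tau ->
  x + d < size pi ->
  index (nth 0 tau (d + x)) pi = d + index (nth 0 tau x) pi.
Proof.
move=> upi ppt opi otau Htake Hdrop xd.
have sz : size tau = size pi by rewrite (perm_size ppt).
have utau : uniq tau by rewrite -(perm_uniq ppt).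
set m := size pi in xd Htake sz *.
move: opi otau; rewrite !overlaps_mem sz -/m => /andP[dm /eqP Spi] /andP[_ /eqP Stau].
have xmd : x < m - d by lia.
have e1 : rank (drop d tau) (nth 0 tau (d + x)) = rank (take (m - d) tau) (nth 0 tau x).
  have := congr1 (fun s => nth 0 s x) Stau.
  rewrite !nth_st ?size_drop ?size_take ?sz //; last by case: ifP; lia.
  by rewrite nth_drop nth_take.
have rd : forall y, rank (drop d tau) y = rank (drop d pi) y.
  move=> y; apply: rank_perm; apply: uniq_perm; rewrite ?drop_uniq //.
  try by move=> z; rewrite Hdrop.
have rt : forall y, rank (take (m - d) tau) y = rank (take (m - d) pi) y.
  move=> y; apply: rank_perm; apply: uniq_perm; rewrite ?take_uniq //.
  try by move=> z; rewrite Htake.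
set tx := nth 0 tau x in e1 *.
have txt : tx \in take (m - d) tau by rewrite /tx -(nth_take 0 xmd) mem_nth // size_take sz; case: ifP; lia.
have txp : tx \in take (m - d) pi by rewrite Htake.
have ip : index tx pi = index tx (take (m - d) pi).
  by rewrite -{1}(cat_take_drop (m - d) pi) index_cat txp.
have ipl : index tx pi < m - d.
  rewrite ip; move: txp; rewrite -index_mem size_take; case: ifP => //; lia.
have txpi : tx \in pi by apply: mem_take txp.
have ntx : nth 0 pi (index tx pi) = tx by rewrite nth_index.
set p' := index tx pi in ipl ntx *.
have sdp : size (drop d pi) = m - d by rewrite size_drop.
have stp : size (take (m - d) pi) = m - d by rewrite size_takel // -/m; lia.
have e2 : rank (take (m - d) pi) tx = rank (drop d pi) (nth 0 pi (d + p')).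
  have := congr1 (fun s => nth 0 s p') Spi => /=.
  rewrite nth_st ?sdp // nth_st ?stp // nth_drop nth_take // ntx => ->.
  done.
have : nth 0 tau (d + x) = nth 0 pi (d + p').
  apply: (@rank_inj (drop d pi)).
  - by rewrite Hdrop -nth_drop mem_nth // size_drop sz; lia.
  - by rewrite -nth_drop mem_nth // sdp; lia.
  by rewrite -rd e1 rt e2.
move=> ->; rewrite index_uniq //; rewrite -/m; lia.
Qed.

Definition occ (p s : seq nat) (i : nat) : bool :=
  (i + size p <= size s) && (st (take (size p) (drop i s)) == p).

Lemma st_drop_st w d : st (drop d (st w)) = st (drop d w).
Proof. by rewrite [st w]st_rank -map_drop st_sub_rank // => x /mem_drop. Qed.

Lemma st_take_st w d : st (take d (st w)) = st (take d w).
Proof. by rewrite [st w]st_rank -map_take st_sub_rank // => x /mem_take. Qed.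

Lemma occ_overlap pi sg s s' : occ pi sg s -> occ pi sg s' ->
  s < s' < s + size pi -> s' - s \in overlaps pi.
Proof.
rewrite /occ => /andP[h1 /eqP e1] /andP[h2 /eqP e2] hs.
rewrite overlaps_mem; apply/andP; split; first by lia.
move: e1 e2; set m := size pi => e1 e2.
rewrite -{1}e1 -{1}e2 st_drop_st st_take_st; apply/eqP; congr st.
apply: (@eq_from_nth _ 0).
  rewrite size_drop !size_takel ?size_drop; lia.
move=> j; rewrite size_drop size_takel ?size_drop; last by lia.
move=> hj; rewrite nth_drop !nth_take ?nth_drop; try lia.
congr nth; lia.
Qed.

Definition compat (pi tau : seq nat) : Prop :=
  [/\ uniq pi, perm_eq pi tau, overlaps pi = overlaps tau &
   forall d, d \in overlaps pi ->
     take (size pi - d) pi =i take (size pi - d) tau /\ drop d pi =i drop d tau].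

Lemma compat_sym pi tau : compat pi tau -> compat tau pi.
Proof.
case=> u p o h; split.
- by rewrite -(perm_uniq p).
- by rewrite perm_sym.
- by [].
move=> d; rewrite -o -(perm_size p) => /h [h1 h2]; split => x; by rewrite ?h1 ?h2.
Qed.

Definition phi (pi tau : seq nat) (j : nat) := index (nth 0 tau j) pi.

Definition Psi (pi tau : seq nat) (sts : seq nat) (q : nat) : nat :=
  if [seq s <- sts | s <= q < s + size pi] is s :: _ then s + phi pi tau (q - s) else q.

Lemma phi_lt pi tau j : compat pi tau -> j < size pi -> phi pi tau j < size pi.
Proof.
case=> u p _ _ hj; rewrite /phi index_mem (perm_mem p) mem_nth //.
by rewrite -(perm_size p).
Qed.

Lemma phiK pi tau x : compat pi tau -> x < size pi -> phi tau pi (phi pi tau x) = x.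
Proof.
case=> u p _ _ hx; have ut : uniq tau by rewrite -(perm_uniq p).
have hx' : x < size tau by rewrite -(perm_size p).
have m : nth 0 tau x \in pi by rewrite (perm_mem p) mem_nth.
by rewrite /phi nth_index // index_uniq.
Qed.

Lemma Psi_win pi tau sts s q : compat pi tau ->
  (forall s s', s \in sts -> s' \in sts -> s < s' < s + size pi -> s' - s \in overlaps pi) ->
  s \in sts -> s <= q < s + size pi -> Psi pi tau sts q = s + phi pi tau (q - s).
Proof.
move=> C HG ss hq; have [u p o h] := C.
rewrite /Psi; case E: [seq s <- sts | s <= q < s + size pi] => [|s0 l].
  by have := mem_filter (fun s => s <= q < s + size pi) s sts; rewrite E ss hq.
have : s0 \in [seq s <- sts | s <= q < s + size pi] by rewrite E mem_head.
rewrite mem_filter => /andP[hq0 s0s].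
case: (ltngtP s0 s) => hs; last by rewrite hs.
- have od : s - s0 \in overlaps pi by apply: HG => //; lia.
  have [h1 h2] := h _ od.
  have := @consist pi tau (s - s0) (q - s) u p od; rewrite -o => /(_ od h1 h2).
  have -> : s - s0 + (q - s) = q - s0 by lia.
  have hh : q - s + (s - s0) < size pi by lia.
  move/(_ hh); rewrite /phi => ->; lia.
- have od : s0 - s \in overlaps pi by apply: HG => //; lia.
  have [h1 h2] := h _ od.
  have := @consist pi tau (s0 - s) (q - s0) u p od; rewrite -o => /(_ od h1 h2).
  have -> : s0 - s + (q - s0) = q - s by lia.
  have hh : q - s0 + (s0 - s) < size pi by lia.
  move/(_ hh); rewrite /phi => ->; lia.
Qed.

Lemma Psi_out pi tau sts q :
  (forall s, s \in sts -> ~~ (s <= q < s + size pi)) -> Psi pi tau sts q = q.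
Proof.
move=> H; rewrite /Psi; case E: [seq s <- sts | s <= q < s + size pi] => [|s0 l] //.
have : s0 \in [seq s <- sts | s <= q < s + size pi] by rewrite E mem_head.
by rewrite mem_filter => /andP[hq0 /H]; rewrite hq0.
Qed.

Lemma perm_iota_inj (f : nat -> nat) n : (forall q, q < n -> f q < n) ->
  (forall q q', q < n -> q' < n -> f q = f q' -> q = q') ->
  perm_eq (map f (iota 0 n)) (iota 0 n).
Proof.
move=> hl hi.
have u : uniq (map f (iota 0 n)).
  rewrite map_inj_in_uniq ?iota_uniq // => x y; rewrite !mem_iota /= !add0n.
  exact: hi.
have sub : {subset map f (iota 0 n) <= iota 0 n}.
  by move=> y /mapP[x]; rewrite !mem_iota /= !add0n => /hl hx ->.
apply: uniq_perm => //; first exact: iota_uniq.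
have [] := uniq_min_size u sub; last by [].
by rewrite size_map.
Qed.

Definition HGood (pi : seq nat) (sts : seq nat) : Prop :=
  forall s s', s \in sts -> s' \in sts -> s < s' < s + size pi -> s' - s \in overlaps pi.

Lemma Psi_lt pi tau sts n q : compat pi tau -> HGood pi sts ->
  (forall s, s \in sts -> s + size pi <= n) -> q < n -> Psi pi tau sts q < n.
Proof.
move=> C HG HW hq.
case: (boolP (has (fun s => s <= q < s + size pi) sts)).
  case/hasP=> s ss hs; rewrite (Psi_win C HG ss hs).
  have := HW _ ss; have := @phi_lt pi tau (q - s) C; lia.
by move/hasPn=> H; rewrite Psi_out.
Qed.

Lemma PsiK pi tau sts q : compat pi tau -> HGood pi sts ->
  Psi tau pi sts (Psi pi tau sts q) = q.
Proof.
move=> C HG; have C' := compat_sym C; have [u p o h] := C.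
have sz : size tau = size pi by rewrite (perm_size p).
have HG' : HGood tau sts by move=> s s' a b; rewrite -o sz; exact: HG.
case: (boolP (has (fun s => s <= q < s + size pi) sts)).
  case/hasP=> s ss hs; rewrite (Psi_win C HG ss hs).
  have hl := @phi_lt pi tau (q - s) C.
  rewrite (Psi_win C' HG' ss); last by rewrite sz; lia.
  have -> : s + phi pi tau (q - s) - s = phi pi tau (q - s) by lia.
  rewrite phiK //; lia.
move/hasPn=> H; rewrite !Psi_out // sz //.
Qed.

Definition sgPsi pi tau sts n (sg : seq nat) :=
  [seq nth 0 sg (Psi pi tau sts q) | q <- iota 0 n].

Lemma perm_Psi pi tau sts n : compat pi tau -> HGood pi sts ->
  (forall s, s \in sts -> s + size pi <= n) ->
  perm_eq (map (Psi pi tau sts) (iota 0 n)) (iota 0 n).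
Proof.
move=> C HG HW; apply: perm_iota_inj => q.
  exact: Psi_lt.
move=> q' _ _ e; by rewrite -(PsiK q C HG) e PsiK.
Qed.

Lemma sgPsi_perm pi tau sts n sg : compat pi tau -> HGood pi sts ->
  (forall s, s \in sts -> s + size pi <= n) ->
  perm_eq sg (iota 1 n) -> perm_eq (sgPsi pi tau sts n sg) (iota 1 n).
Proof.
move=> C HG HW psg; have sz : size sg = n by rewrite (perm_size psg) size_iota.
apply: perm_trans psg; rewrite /sgPsi.
have -> : [seq nth 0 sg (Psi pi tau sts q) | q <- iota 0 n] =
   map (nth 0 sg) (map (Psi pi tau sts) (iota 0 n)) by rewrite -map_comp.
rewrite -{2}(take_size sg) sz -(map_nth_iota0 0) ?sz //.
exact/perm_map/perm_Psi.
Qed.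

Lemma sgPsi_inj pi tau sts n sg sg' : compat pi tau -> HGood pi sts ->
  (forall s, s \in sts -> s + size pi <= n) ->
  size sg = n -> size sg' = n ->
  sgPsi pi tau sts n sg = sgPsi pi tau sts n sg' -> sg = sg'.
Proof.
move=> C HG HW s1 s2 e; apply: (@eq_from_nth _ 0); first by rewrite s1 s2.
move=> k; rewrite s1 => hk.
have : k \in map (Psi pi tau sts) (iota 0 n).
  by rewrite (perm_mem (perm_Psi C HG HW)) mem_iota.
case/mapP=> q; rewrite mem_iota /= add0n => hq ->.
have := congr1 (nth 0 ^~ q) e; rewrite /sgPsi.
by rewrite !(nth_map 0) ?size_iota // nth_iota.
Qed.

Lemma perm_phi pi tau : compat pi tau ->
  perm_eq (map (phi pi tau) (iota 0 (size pi))) (iota 0 (size pi)).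
Proof.
move=> C; apply: perm_iota_inj => q.
  exact: phi_lt.
move=> q' h1 h2 e; by rewrite -(phiK C h1) e phiK.
Qed.

Lemma transfer pi tau sts n sg s : compat pi tau -> HGood pi sts ->
  (forall s, s \in sts -> s + size pi <= n) -> size sg = n ->
  s \in sts -> occ pi sg s -> occ tau (sgPsi pi tau sts n sg) s.
Proof.
move=> C HG HW hsz ss; have [u p o h] := C; subst n.
have sz : size tau = size pi by rewrite (perm_size p).
rewrite /occ sz /sgPsi size_map size_iota => /andP[hs /eqP e]; rewrite hs /=.
set m := size pi in hs e *.
set w := take m (drop s sg) in e *.
have sw : size w = m by rewrite size_takel // size_drop; lia.
have ev : take m (drop s [seq nth 0 sg (Psi pi tau sts q) | q <- iota 0 (size sg)]) =
   map (nth 0 w) (map (phi pi tau) (iota 0 m)).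
  apply: (@eq_from_nth _ 0).
    by rewrite !size_map size_iota size_takel // size_drop size_map size_iota; lia.
  move=> j; rewrite size_takel ?size_drop ?size_map ?size_iota; last by lia.
  move=> hj; rewrite nth_take // nth_drop (nth_map 0); last by rewrite size_iota; lia.
  rewrite (nth_map 0); last by rewrite size_map size_iota.
  rewrite (nth_map 0); last by rewrite size_iota.
  rewrite !nth_iota; try lia.
  rewrite (Psi_win C HG ss); last by lia.
  have -> : 0 + (s + j) - s = j by lia.
  rewrite /w nth_take ?nth_drop //; exact: phi_lt.
rewrite ev; apply/eqP.
have pv : perm_eq (map (nth 0 w) (map (phi pi tau) (iota 0 m))) w.
  by rewrite -{2}(take_size w) -(map_nth_iota0 0) ?sw //; apply/perm_map/perm_phi.
apply: (@eq_from_nth _ 0); first by rewrite size_st !size_map size_iota sz.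
move=> j; rewrite size_st !size_map size_iota => hj.
rewrite nth_st ?size_map ?size_iota // (rank_perm _ pv) !(nth_map 0) ?size_iota //.
rewrite nth_iota // add0n -nth_st ?sw ?e; last exact: phi_lt.
have ut : nth 0 tau j \in pi by rewrite (perm_mem p) mem_nth ?sz.
by rewrite /phi nth_index.
by rewrite size_map size_iota.
Qed.

Lemma count_sum (T : Type) (a : pred T) s : count a s = \sum_(x <- s) (a x : nat).
Proof. by elim: s => [|x s IH]; rewrite ?big_nil ?big_cons //= IH. Qed.

Lemma mobius (T : finType) (f g : {set T} -> nat) :
  (forall A : {set T}, \sum_(B : {set T} | A \subset B) f B = \sum_(B : {set T} | A \subset B) g B) ->
  forall A : {set T}, f A = g A.
Proof.
move=> H A.
suff: forall k A, #|~: A| < k -> f A = g A by apply; apply: ltnSn.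
elim=> [|k IH] {}A //= hA.
have E : \sum_(B : {set T} | (A \subset B) && (B != A)) f B =
         \sum_(B : {set T} | (A \subset B) && (B != A)) g B.
  apply: eq_bigr => B /andP[AB BA]; apply: IH.
  have : ~: B \proper ~: A by rewrite properC properEneq eq_sym BA.
move/proper_card; lia.
have := H A; rewrite (bigD1 A) //= (bigD1 A (P := fun B => A \subset B)) //= E.
by move/addIn.
Qed.

Lemma count_inj (T : eqType) (P : seq T) (a b : pred T) (f : T -> T) :
  uniq P -> (forall x, x \in P -> f x \in P) -> {in P &, injective f} ->
  (forall x, x \in P -> a x -> b (f x)) -> count a P <= count b P.
Proof.
move=> uP fP fi ab; rewrite -!size_filter -(size_map f).
apply: uniq_leq_size.
  rewrite map_inj_in_uniq ?filter_uniq // => x y; rewrite !mem_filter.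
  by move=> /andP[_ ?] /andP[_ ?]; apply: fi.
move=> y /mapP[x]; rewrite !mem_filter => /andP[ax xP] ->.
by rewrite ab // fP.
Qed.

Lemma Em_occ p sg i : (i \in Em p sg) = (0 < i) && occ p sg i.-1.
Proof.
rewrite /Em mem_filter mem_iota /occ /window.
case: i => [|i] //=; rewrite andbC; congr (_ && _); lia.
Qed.

Lemma Em_lt p sg i : i \in Em p sg -> i < (size sg).+2.
Proof. rewrite /Em mem_filter mem_iota => /andP[_]; lia. Qed.

Definition Epi (K : nat) p sg : {set 'I_K} := [set i : 'I_K | val i \in Em p sg].
Definition Fc n p (A : {set 'I_n.+2}) :=
  count (fun sg => A \subset Epi n.+2 p sg) (permutations (iota 1 n)).
Definition Ac n p (A : {set 'I_n.+2}) :=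
  count (fun sg => Epi n.+2 p sg == A) (permutations (iota 1 n)).

Arguments Fc : clear implicits.
Arguments Ac : clear implicits.

Lemma Fc_sum n p A : Fc n p A = \sum_(B : {set _} | A \subset B) Ac n p B.
Proof.
rewrite /Fc /Ac count_sum.
rewrite (eq_bigr (fun B => \sum_(sg <- permutations (iota 1 n)) (Epi n.+2 p sg == B : nat))); last by move=> B _; rewrite count_sum.
rewrite exchange_big /=; apply: eq_bigr => sg _.
rewrite big_mkcond (bigD1 (Epi n.+2 p sg)) //= eqxx big1 ?addn0.
  by case: (A \subset _).
by move=> B /negbTE; rewrite eq_sym => ->; case: (A \subset B).
Qed.

Lemma F_le n pi tau A : compat pi tau -> Fc n pi A <= Fc n tau A.
Proof.
move=> C; rewrite /Fc; set P := permutations (iota 1 n).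
case: (boolP (has (fun sg => A \subset Epi n.+2 pi sg) P)); last first.
  by rewrite has_count -leqNgt leqn0 => /eqP ->.
case/hasP=> sg0 sg0P Asg0.
set sts := [seq (val i).-1 | i <- enum A].
have sz0 : size sg0 = n.
  by move: sg0P; rewrite mem_permutations => /perm_size ->; rewrite size_iota.
have occ0 : forall s, s \in sts -> occ pi sg0 s.
  move=> s /mapP[i]; rewrite mem_enum => iA ->.
  by have := subsetP Asg0 i iA; rewrite inE Em_occ => /andP[_ ->].
have HW : forall s, s \in sts -> s + size pi <= n.
  by move=> s /occ0 /andP[h _]; rewrite -sz0.
have HG : HGood pi sts.
  by move=> s s' hs hs' hss; exact: occ_overlap (occ0 _ hs) (occ0 _ hs') hss.
apply: (count_inj (f := sgPsi pi tau sts n)).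
- exact: permutations_uniq.
- by move=> x; rewrite /P !mem_permutations; apply: sgPsi_perm.
- move=> x y; rewrite /P !mem_permutations => /perm_size hx /perm_size hy.
  by apply: (sgPsi_inj C HG HW); rewrite ?hx ?hy size_iota.
move=> x; rewrite /P mem_permutations => /perm_size hx /subsetP H.
apply/subsetP => i iA; have := H i iA; rewrite !inE !Em_occ => /andP[-> ho] /=.
apply: transfer => //; first by rewrite hx size_iota.
by apply: map_f; rewrite mem_enum.
Qed.

Lemma seteq_Epi n p sg (S : seq nat) : size sg = n ->
  seteq (Em p sg) S =
  (Epi n.+2 p sg == [set i : 'I_n.+2 | val i \in S]) && all (fun x => x < n.+2) S.
Proof.
move=> hs; rewrite /seteq; apply/idP/idP.
  case/andP=> /allP h1 /allP h2.
  have h3 : all (fun x => x < n.+2) S.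
    by apply/allP => x /h2 /Em_lt; rewrite hs.
  rewrite h3 andbT; apply/eqP/setP => i; rewrite !inE.
  by apply/idP/idP => [/h1|/h2].
case/andP=> /eqP E /allP h; apply/andP; split; apply/allP => x hx.
  have hx' : x < n.+2 by rewrite -hs; exact: Em_lt hx.
  by have := congr1 (fun B : {set 'I_n.+2} => Ordinal hx' \in B) E; rewrite !inE /= hx => <-.
have hx' := h x hx.
by have := congr1 (fun B : {set 'I_n.+2} => Ordinal hx' \in B) E; rewrite !inE /= hx => ->.
Qed.

Theorem theorem1p11 (m : nat) (pi tau : seq nat) :
  is_perm m pi -> is_perm m tau ->
  overlaps pi = overlaps tau ->
  (forall i, i \in overlaps pi ->
     take (m - i) pi =i take (m - i) tau /\ drop i pi =i drop i tau) ->
  super_strongly_cwilf_equiv pi tau.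
Proof.
rewrite /is_perm => hp ht o h.
have szp : size pi = m by rewrite (perm_size hp) size_iota.
have C : compat pi tau.
  split => //.
  - by rewrite (perm_uniq hp) iota_uniq.
  - by apply: perm_trans hp _; rewrite perm_sym.
  by rewrite szp.
move=> n S _.
have E : forall p, a_count p n S =
   count (fun sg => (Epi n.+2 p sg == [set i : 'I_n.+2 | val i \in S]) &&
                    all (fun x => x < n.+2) S) (permutations (iota 1 n)).
  move=> p; rewrite /a_count; apply: eq_in_count => sg.
  rewrite mem_permutations => /perm_size; rewrite size_iota => hs.
  exact: seteq_Epi.
rewrite !E; case: (all _ S); last by rewrite !(eq_count (a2 := pred0)) ?count_pred0 // => x; rewrite andbF.
have E2 : forall p, count (fun sg => (Epi n.+2 p sg == [set i : 'I_n.+2 | val i \in S]) && true)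
    (permutations (iota 1 n)) = Ac n p [set i : 'I_n.+2 | val i \in S].
  by move=> p; apply: eq_count => x; rewrite andbT.
rewrite !E2; apply: mobius => A.
rewrite -!Fc_sum /=; apply/eqP; rewrite eqn_leq !F_le //; exact: compat_sym.
Qed.
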